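(* Fix real numbers $\beta_0,\beta_3,\beta_4$ and a constant $k$. For $(\beta_1,\beta_2)\in\mathbb{R}^2$ let $T$ be the $3\times3$ matrix $$T=\begin{pmatrix}\beta_1&\beta_2&0\\ \beta_3&\beta_4&0\\ 0&0&\beta_0\end{pmatrix},$$ and let $\mathcal{M}(\beta_1,\beta_2)$ be the sum of the two largest eigenvalues of $T^{T}T$. Then the set $\{(\beta_1,\beta_2)\in\mathbb{R}^2:\mathcal{M}(\beta_1,\beta_2)=k\}$ is a connected subset of the union of a circle and an ellipse, both centered at the origin. It consists of the arcs of the circle lying within the ellipse and the arcs of the ellipse lying within the circle.
   Context: For a Group 2 two-qubit $X$-state, or a Mermin (grid) hyperplane-state sharing its correlation operators, the correlation matrix $\beta$ (with entries the coefficients of the operators $\sigma_i\otimes\sigma_j$, $\sigma_i,\sigma_j\in\{X,Y,Z\}$) can be brought, by permuting rows and columns, to the form $T$ above. Here $\beta_0$ is the coefficient of the distinguished correlation operator and $\beta_1,\dots,\beta_4$ are the remaining four correlation coefficients. The states are not required to be valid (positive semidefinite). The quantity $\mathcal{M}$ is the Horodecki Bell-violation quantity: the sum of the two largest eigenvalues of $\beta^T\beta$. *)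

(* Defs.v *)
From HB Require Import structures.
From mathcomp Require Import all_boot all_order all_algebra.
From mathcomp Require Import all_classical all_reals topology normedtype.
Set Implicit Arguments. Unset Strict Implicit. Unset Printing Implicit Defensive.
Import Order.TTheory GRing.Theory Num.Theory numFieldNormedType.Exports.
Local Open Scope ring_scope.
Local Open Scope classical_set_scope.

Definition Tmat (R : realType) (b0 b1 b2 b3 b4 : R) : 'M[R]_3 :=
  \matrix_(i < 3, j < 3)
    nth 0 (nth [::] [:: [:: b1; b2; 0]; [:: b3; b4; 0]; [:: 0; 0; b0]] i) j.

(* [horodeckiM A m] : m is the sum of the two largest eigenvalues of A^T A,
   i.e. char_poly (A^T A) = (X - l1)(X - l2)(X - l3) with l1 >= l2 >= l3
   (eigenvalues counted with multiplicity) and m = l1 + l2. *)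
Definition horodeckiM (R : realType) (A : 'M[R]_3) (m : R) : Prop :=
  exists l1 l2 l3 : R, l3 <= l2 /\ l2 <= l1 /\
    char_poly (A^T *m A) = ('X - l1%:P) * ('X - l2%:P) * ('X - l3%:P) /\
    m = l1 + l2.

Definition circle (R : realType) (r : R) : set (R * R) :=
  [set p | p.1 ^+ 2 + p.2 ^+ 2 = r ^+ 2].
Definition disk (R : realType) (r : R) : set (R * R) :=
  [set p | p.1 ^+ 2 + p.2 ^+ 2 <= r ^+ 2].

Definition is_ellipse_param (R : realType) (a b c : R) : Prop :=
  0 < a /\ b ^+ 2 < a * c.
Definition ellipse (R : realType) (a b c : R) : set (R * R) :=
  [set p | a * p.1 ^+ 2 + 2 * b * p.1 * p.2 + c * p.2 ^+ 2 = 1].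
Definition ellipse_region (R : realType) (a b c : R) : set (R * R) :=
  [set p | a * p.1 ^+ 2 + 2 * b * p.1 * p.2 + c * p.2 ^+ 2 <= 1].

(* Main.v *)
Require Import Defs.
From HB Require Import structures.
From mathcomp Require Import all_boot all_order all_algebra.
From mathcomp Require Import all_classical all_reals topology normedtype.
From mathcomp Require Import realfun.
From mathcomp Require Import ring lra.
Import Order.TTheory GRing.Theory Num.Theory numFieldNormedType.Exports.
Local Open Scope ring_scope.
Local Open Scope classical_set_scope.

Lemma max1 (R : realFieldType) (x y : R) :
  Num.max x y = 1 <-> (x = 1 /\ y <= 1) \/ (y = 1 /\ x <= 1).
Proof.
rewrite maxr_absE.
have [hAB|hAB] := leP 0 (x - y).
- rewrite (ger0_norm hAB); split; first by move=> h; left; split; lra.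
  by case=> [[h1 h2]|[h1 h2]]; lra.
- rewrite (ltr0_norm hAB); split; first by move=> h; right; split; lra.
  by case=> [[h1 h2]|[h1 h2]]; lra.
Qed.




Lemma det3 (R : comNzRingType) (A : 'M[R]_3) : \det A =
  A 0 0 * (A 1 1 * A 2 2 - A 1 2 * A 2 1)
  - A 0 1 * (A 1 0 * A 2 2 - A 1 2 * A 2 0)
  + A 0 2 * (A 1 0 * A 2 1 - A 1 1 * A 2 0).
Proof.
rewrite (expand_det_row _ 0) !big_ord_recr big_ord0 /=.
rewrite /cofactor !(expand_det_row _ 0) !big_ord_recr big_ord0 /= /cofactor.
rewrite !det_mx11 !mxE /= !big_ord0.
pose f := fun n m : nat => A (inord n) (inord m).
have Af : forall i j, A i j = f i j by move=> i j; rewrite /f !inord_val.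
rewrite !Af /=. ring.
Qed.

Lemma charT (R : realType) (b0 b1 b2 b3 b4 : R) :
  char_poly ((Tmat b0 b1 b2 b3 b4)^T *m Tmat b0 b1 b2 b3 b4) =
  ('X - (b0^+2)%:P) * ('X^2 - (b1^+2+b2^+2+b3^+2+b4^+2)%:P * 'X + ((b1*b4-b2*b3)^+2)%:P).
Proof.
rewrite /char_poly det3 /char_poly_mx !mxE.
rewrite !big_ord_recr !big_ord0 /= !mxE /= ?big_ord0.
rewrite !(polyCD, polyCM, polyCB, polyCN, polyC0, expr2). rewrite !mulr1n !mulr0n. ring.
Qed.



Lemma quad_fact (R : comNzRingType) (a b : R) :
  ('X - a%:P) * ('X - b%:P) = 'X^2 - (a + b)%:P * 'X + (a * b)%:P.
Proof. rewrite polyCD polyCM; ring. Qed.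

Lemma eval_eq {R : comNzRingType} {p q : {poly R}} (x : R) : p = q -> p.[x] = q.[x].
Proof. by move->. Qed.

Lemma abs_dir1 (R : realType) (c u w dd k : R) (hc: 0 <= c) (H: w < k - c)
  l1 l2 l3 : l3 <= l2 -> l2 <= l1 ->
  ('X - c%:P) * ('X^2 - (u+w)%:P * 'X + dd%:P) = ('X - l1%:P) * ('X - l2%:P) * ('X - l3%:P) ->
  k = l1 + l2 ->
  (u = k - w /\ (k-c)*(u+w) - dd <= (k-c)^+2) \/ ((k-c)*(u+w) - dd = (k-c)^+2 /\ u + w <= k).
Proof.
move=> h32 h21 E hk.
have E0 := eval_eq 0 E; have E1 := eval_eq 1 E; have Em := eval_eq (-1) E.
have E3 := eval_eq l3 E.
rewrite !hornerE /= in E0 E1 Em E3.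
set t := u + w in E0 E1 Em E3 *.
have e1 : l1 + l2 + l3 = t + c by nra.
have e3 : l1 * l2 * l3 = c * dd by nra.
have e2 : l1 * l2 + l1 * l3 + l2 * l3 = t * c + dd by nra.
have hl3 : l3 = t + c - k by lra.
rewrite subrr mulr0 in E3. have : (l3 - c) * (l3 ^+ 2 - t * l3 + dd) = 0 by rewrite -E3; ring.
move/eqP; rewrite mulf_eq0 => /orP [/eqP h|/eqP h].
- left; split; first by rewrite /t in hl3; lra.
  have htk : t = k by lra.
  have s1 : l1 + l2 = t by lra.
  have s2 : l1 * l2 = dd by nra.
  have : 0 <= (l1 - c) * (l2 - c) by apply: mulr_ge0; lra.
  rewrite -htk; nra.
- right; split.
    rewrite hl3 in h. nra.
  have s1 : l1 + l2 = t + c - l3 by lra.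
  have s2 : l1 * l2 = c * (t - l3).
    have : l1 * l2 = t * c + dd - l3 * (l1 + l2) by lra.
    rewrite s1 => ->. nra.
  have : (l1 - c) * (l2 - c) = 0 by nra.
  move/eqP; rewrite mulf_eq0 => /orP [/eqP h'|/eqP h']; lra.
Qed.





Lemma abs_dir2 (R : realType) (c u w dd k : R) (hc: 0 <= c) (hdd : 0 <= dd)
  (hu : 0 <= u) (hw : 0 <= w) (huw : dd <= u * w) (H: w < k - c) :
  (u = k - w /\ (k-c)*(u+w) - dd <= (k-c)^+2) \/ ((k-c)*(u+w) - dd = (k-c)^+2 /\ u + w <= k) ->
  exists l1 l2 l3 : R, l3 <= l2 /\ l2 <= l1 /\
  ('X - c%:P) * ('X^2 - (u+w)%:P * 'X + dd%:P) = ('X - l1%:P) * ('X - l2%:P) * ('X - l3%:P) /\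
  k = l1 + l2.
Proof.
set t := u + w.
case=> [[hu' hE]|[hE ht]].
- have htk : t = k by rewrite /t; lra.
  have hdisc : 0 <= t ^+ 2 - 4 * dd by have := sqr_ge0 (u - w); rewrite /t; nra.
  set D := Num.sqrt (t ^+ 2 - 4 * dd).
  have hD0 : 0 <= D by exact: sqrtr_ge0.
  have hD2 : D ^+ 2 = t ^+ 2 - 4 * dd by rewrite sqr_sqrtr.
  have hfc : 0 <= c ^+ 2 - t * c + dd by rewrite htk in hE *; nra.
  have ht2c : 2 * c <= t.
    rewrite leNgt; apply/negP => hlt.
    have hfu : u ^+ 2 - t * u + dd <= 0.
      have -> : u ^+ 2 - t * u + dd = dd - u * w by rewrite /t; ring.
      lra.
    have huc : c < u by lra.
    nra.
  have hDle : D <= t - 2 * c.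
    rewrite -(ger0_norm (_ : 0 <= t - 2 * c)); last by lra.
    rewrite -sqrtr_sqr /D; apply: ler_wsqrtr; nra.
  exists ((t + D) / 2), ((t - D) / 2), c.
  split; first by lra.
  split; first by lra.
  split; last by lra.
  rewrite quad_fact [RHS]mulrC; congr (_ * _); congr (_ - _ * _ + _); congr (_%:P).
  + by field.
  + have h4 : (4:R) != 0 by rewrite lt0r_neq0 //; lra.
    apply: (mulfI h4).
    have -> : 4 * ((t + D) / 2 * ((t - D) / 2)) = t ^+ 2 - D ^+ 2 by field; rewrite ?oner_eq0.
    rewrite hD2; ring.
- set K := k - c.
  have hKt : t - K <= c by rewrite /K; lra.
  have hfK : K ^+ 2 - t * K + dd = 0.
    have -> : K ^+ 2 - t * K + dd = -(K * t - dd - K ^+ 2) by ring.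
    by rewrite hE subrr oppr0.
  have hKw : w < K by rewrite /K; lra.
  have hK2 : t <= 2 * K.
    rewrite leNgt; apply/negP => hlt.
    have hfw : w ^+ 2 - t * w + dd <= 0.
      have -> : w ^+ 2 - t * w + dd = dd - u * w by rewrite /t; ring.
      lra.
    have h1 : 0 < (K - w) * (t - w - K) by apply: mulr_gt0; lra.
    nra.
  have fac : 'X^2 - t%:P * 'X + dd%:P = ('X - K%:P) * ('X - (t - K)%:P).
    rewrite quad_fact; congr (_ - _ * _ + _); congr (_%:P); [ring|nra].
  case: (lerP K c) => hKc.
  + exists c, K, (t - K); split; first by lra. split; first by lra.
    split; last by rewrite /K; lra.
    rewrite fac; ring.
  + exists K, c, (t - K); split; first by lra. split; first by lra.
    split; last by rewrite /K; lra.
    rewrite fac; ring.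
Qed.

Section Conn.
Variable R : realType.
Variables r a b c : R.

Definition Af (p : R * R) := (p.1 * p.1 + p.2 * p.2) / (r * r).
Definition Bf (p : R * R) := a * (p.1 * p.1) + 2 * b * (p.1 * p.2) + c * (p.2 * p.2).
Definition gf p := Num.max (Af p) (Bf p).
Definition phi p := (p.1 / Num.sqrt (gf p), p.2 / Num.sqrt (gf p)).

Lemma connR : connected [set: R].
Proof.
by apply/connected_intervalP.
Qed.

Lemma contM (f g : R -> R) : continuous f -> continuous g -> continuous (fun t => f t * g t).
Proof. move=> cf cg x; exact: (continuousM (cf x) (cg x)). Qed.
Lemma contD (f g : R -> R) : continuous f -> continuous g -> continuous (fun t => f t + g t).
Proof. move=> cf cg x; exact: (continuousD (cf x) (cg x)). Qed.
Lemma contN (f : R -> R) : continuous f -> continuous (fun t => - f t).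
Proof. move=> cf x; exact: (continuousN (cf x)). Qed.
Lemma contId : continuous (fun t : R => t).
Proof. move=> x; exact: cvg_id. Qed.
Lemma contC (k : R) : continuous (fun _ : R => k).
Proof. move=> x; exact: cvg_cst. Qed.
Lemma contV (f : R -> R) : continuous f -> (forall t, f t != 0) -> continuous (fun t => (f t)^-1).
Proof. move=> cf nz x; exact: (continuousV (nz x) (cf x)). Qed.
Lemma contmax (f g : R -> R) : continuous f -> continuous g -> continuous (fun t => Num.max (f t) (g t)).
Proof. move=> cf cg x; exact: (continuous_max (cf x) (cg x)). Qed.
Lemma contsqrt (f : R -> R) : continuous f -> continuous (fun t => Num.sqrt (f t)).
Proof. move=> cf x; exact: (continuous_comp (cf x) (@sqrt_continuous R (f x))). Qed.

Lemma cont_phi (f1 f2 : R -> R) : 0 < r -> continuous f1 -> continuous f2 ->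
  (forall t, 0 < f1 t * f1 t + f2 t * f2 t) ->
  continuous (fun t => phi (f1 t, f2 t)).
Proof.
move=> r0 c1 c2 nz.
have gpos : forall t, 0 < gf (f1 t, f2 t).
  move=> t; rewrite /gf lt_max; apply/orP; left.
  by rewrite /Af /=; apply: divr_gt0 => //; apply: mulr_gt0.
have ci : continuous (fun t => (Num.sqrt (gf (f1 t, f2 t)))^-1).
  apply: contV; last by move=> t; rewrite gt_eqF // sqrtr_gt0.
  apply: contsqrt; rewrite /gf /Af /Bf /=; apply: contmax.
    by apply: contM; [apply: contD; apply: contM|exact: contC].
  have cc : forall k (f g : R -> R), continuous f -> continuous g -> continuous (fun t => k * (f t * g t)).
    by move=> k f g cf cg; apply: contM; [exact: contC | exact: contM].
  by apply: contD; [apply: contD|]; apply: cc.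
move=> t0; rewrite /phi /continuous_at /=. exact: (cvg_pair (contM _ _ c1 ci t0) (contM _ _ c2 ci t0)).


Qed.

Lemma gf_scale (l : R) (p : R * R) : gf (l * p.1, l * p.2) = (l * l) * gf p.
Proof.
rewrite /gf maxr_pMr; last by rewrite -expr2 sqr_ge0.
congr Num.max; rewrite /Af /Bf /=; ring.
Qed.

Lemma gf_pos {p : R * R} : 0 < r -> p != (0, 0) -> 0 < gf p.
Proof.
move=> r0 nz; rewrite /gf lt_max; apply/orP; left.
rewrite /Af; apply: divr_gt0; last by apply: mulr_gt0.
case: p nz => x y /=; rewrite xpair_eqE negb_and => /orP[hx|hy].
- have := sqr_ge0 y; rewrite expr2 => hy.
  have : 0 < x * x by rewrite -expr2 exprn_even_gt0.
  lra.
- have := sqr_ge0 x; rewrite expr2 => hx.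
  have : 0 < y * y by rewrite -expr2 exprn_even_gt0.
  lra.
Qed.

Lemma phi_scale (l : R) (p : R * R) : 0 < l -> phi (l * p.1, l * p.2) = phi p.
Proof.
move=> l0; rewrite /phi /= gf_scale sqrtrM; last by rewrite -expr2 sqr_ge0.
rewrite -expr2 sqrtr_sqr gtr0_norm //.
have [->|gnz] := eqVneq (Num.sqrt (gf p)) 0; first by rewrite mulr0 !invr0 !mulr0.
congr (_, _); field; apply/andP; split => //; exact: lt0r_neq0.
Qed.

Lemma gf_phi (p : R * R) : 0 < r -> p != (0, 0) -> gf (phi p) = 1.
Proof.
move=> r0 nz; have g0 := gf_pos (p:=p) r0 nz.
have s0 : 0 < Num.sqrt (gf p) by rewrite sqrtr_gt0.
have -> : phi p = ((Num.sqrt (gf p))^-1 * p.1, (Num.sqrt (gf p))^-1 * p.2).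
  by rewrite /phi !(mulrC _^-1).
rewrite gf_scale -expr2 exprVn sqr_sqrtr; last exact: ltW.
by rewrite mulVf // gt_eqF.
Qed.

Lemma phi_fix (p : R * R) : gf p = 1 -> phi p = p.
Proof. by move=> g1; rewrite /phi g1 sqrtr1 !divr1; case: p {g1}. Qed.

Lemma S_iff (p : R * R) : 0 < r ->
  ((circle r `&` ellipse_region a b c) `|` (ellipse a b c `&` disk r)) p <-> gf p = 1.
Proof.
move=> r0.
have rr : 0 < r * r by apply: mulr_gt0.
have eA : Af p = 1 <-> p.1 ^+ 2 + p.2 ^+ 2 = r ^+ 2.
  rewrite /Af !expr2; split.
    by move=> h; rewrite -(divfK (lt0r_neq0 rr) (p.1 * p.1 + p.2 * p.2)) h mul1r.
  by move=> ->; rewrite divff // lt0r_neq0.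
have lA : Af p <= 1 <-> p.1 ^+ 2 + p.2 ^+ 2 <= r ^+ 2.
  by rewrite /Af ler_pdivrMr // mul1r !expr2.
have eB : Bf p = a * p.1 ^+ 2 + 2 * b * p.1 * p.2 + c * p.2 ^+ 2 by rewrite /Bf; ring.
rewrite /circle /disk /ellipse /ellipse_region /=.
rewrite -eB -eA -lA /gf.
by rewrite max1.
Qed.

Lemma conn_S : 0 < r ->
  connected ((circle r `&` ellipse_region a b c) `|` (ellipse a b c `&` disk r)).
Proof.
move=> r0.
pose g1 := fun t : R => (1 - t * t, 2 * t).
pose g2 := fun t : R => (t * t - 1, 2 * t).
have nz1 : forall t, 0 < (g1 t).1 * (g1 t).1 + (g1 t).2 * (g1 t).2.
  move=> t; rewrite /g1 /=.
  have -> : (1 - t * t) * (1 - t * t) + 2 * t * (2 * t) = (1 + t * t) ^+ 2 by ring.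
  rewrite exprn_even_gt0 //; apply: lt0r_neq0.
  have := sqr_ge0 t; rewrite expr2; lra.
have nz2 : forall t, 0 < (g2 t).1 * (g2 t).1 + (g2 t).2 * (g2 t).2.
  move=> t; have := nz1 t; rewrite /g1 /g2 /=.
  have -> : (t * t - 1) * (t * t - 1) = (1 - t * t) * (1 - t * t) by ring.
  by [].
have ne : forall (q : R * R), 0 < q.1 * q.1 + q.2 * q.2 -> q != (0, 0).
  case=> x y /= h; apply/negP => /eqP [hx hy]; move: h; rewrite hx hy; lra.
suff -> : (circle r `&` ellipse_region a b c) `|` (ellipse a b c `&` disk r) =
   (fun t => phi (g1 t)) @` setT `|` (fun t => phi (g2 t)) @` setT.
  apply: connectedU.
  - exists (phi (g1 1)); split; first by exists 1.
    by exists 1 => //; rewrite /g1 /g2; congr phi; congr (_, _); ring.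
  - apply: connected_continuous_connected; first exact: connR.
    apply: continuous_subspaceT.
    apply: (cont_phi (fun t => (g1 t).1) (fun t => (g1 t).2) r0 _ _ nz1).
      by rewrite /g1 /=; apply: contD; [exact: contC|apply: contN; apply: contM; exact: contId].
    by rewrite /g1 /=; apply: contM; [exact: contC|exact: contId].
  - apply: connected_continuous_connected; first exact: connR.
    apply: continuous_subspaceT.
    apply: (cont_phi (fun t => (g2 t).1) (fun t => (g2 t).2) r0 _ _ nz2).
      by rewrite /g2 /=; apply: contD; [apply: contM; exact: contId|exact: contC].
    by rewrite /g2 /=; apply: contM; [exact: contC|exact: contId].
apply/seteqP; split => p; last first.
  by case=> [[t _ <-]|[t _ <-]]; apply/(S_iff _ r0); apply: gf_phi => //; apply: ne.
move/(S_iff _ r0) => hg.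
case: p hg => x y hg.
have rr : 0 < r * r by apply: mulr_gt0.
have pnz : 0 < x * x + y * y.
  have := sqr_ge0 x; have := sqr_ge0 y; rewrite !expr2 => h1 h2.
  rewrite lt_neqAle addr_ge0 // andbT; apply/negP => /eqP h0.
  have hx0 : x * x = 0 by lra.
  have hy0 : y * y = 0 by lra.
  move: hg; rewrite /gf max1 /Af /Bf /= -h0 mul0r.
  have -> : a * (x * x) + 2 * b * (x * y) + c * (y * y) = 0.
    have -> : x = 0 by move/eqP: hx0; rewrite mulf_eq0 orbb => /eqP.
    have -> : y = 0 by move/eqP: hy0; rewrite mulf_eq0 orbb => /eqP.
    by rewrite !(mulr0, mul0r, addr0).
  by case=> [][]; lra.
set n := Num.sqrt (x * x + y * y).
have n0 : 0 < n by rewrite sqrtr_gt0.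
have hn2 : n * n = x * x + y * y by rewrite -expr2 sqr_sqrtr // ltW.
have nx : 0 <= n + x by nra.
have [nx0|nx0] := eqVneq (n + x) 0.
- right; exists 0 => //.
  have hx : x = - n by lra.
  have hy : y * y = 0 by rewrite hx in hn2; lra.
  have hy0 : y = 0 by move/eqP: hy; rewrite mulf_eq0 orbb => /eqP.
  rewrite -(phi_scale n (g2 0) n0).
  have -> : (n * (g2 0).1, n * (g2 0).2) = (x, y).
    by rewrite /g2 /= hx hy0; congr (_, _); ring.
  exact: phi_fix.
- left; exists (y / (n + x)) => //.
  have l0 : 0 < 2 / (n + x) by apply: divr_gt0 => //; rewrite lt_neqAle eq_sym nx0.
  have -> : g1 (y / (n + x)) = (2 / (n + x) * (x, y).1, 2 / (n + x) * (x, y).2).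
    rewrite /g1 /=; congr (_, _); last by field.
    have -> : 1 - y / (n + x) * (y / (n + x)) = ((n + x) * (n + x) - y * y) / ((n + x) * (n + x)) by field.
    have -> : y * y = n * n - x * x by lra.
    by field.
  by rewrite phi_scale //; exact: phi_fix.
Qed.
End Conn.

Theorem proposition5 (R : realType) (b0 b3 b4 k : R)
  (Hnondeg : b3 ^+ 2 + b4 ^+ 2 < k - b0 ^+ 2) :
  let L := [set p : R * R | horodeckiM (Tmat b0 p.1 p.2 b3 b4) k] in
  exists r a b c : R,
    0 < r /\ is_ellipse_param a b c /\
    L `<=` circle r `|` ellipse a b c /\
    L = (circle r `&` ellipse_region a b c) `|` (ellipse a b c `&` disk r) /\
    connected L.
Proof.
move=> L.
set w := b3 ^+ 2 + b4 ^+ 2.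
set c0 := b0 ^+ 2.
set K := k - c0.
have hw : 0 <= w by rewrite /w addr_ge0 // sqr_ge0.
have hc0 : 0 <= c0 by rewrite /c0 sqr_ge0.
have hKw : w < K by [].
have hK : 0 < K by lra.
set den := K * (K - w).
have hden : 0 < den by apply: mulr_gt0; lra.
have hkw : 0 < k - w by rewrite /K in hKw; lra.
set r := Num.sqrt (k - w).
have r0 : 0 < r by rewrite sqrtr_gt0.
have r2 : r ^+ 2 = k - w by rewrite sqr_sqrtr // ltW.
set ea := (K - b4 ^+ 2) / den.
set eb := b3 * b4 / den.
set ec := (K - b3 ^+ 2) / den.
have dnz : den != 0 by rewrite gt_eqF.
have qf : forall x y, ea * x ^+ 2 + 2 * eb * x * y + ec * y ^+ 2 =
    (K * (x ^+ 2 + y ^+ 2) - (x * b4 - y * b3) ^+ 2) / den.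
  by move=> x y; rewrite /ea /eb /ec; field.
have hb4 : b4 ^+ 2 <= w by rewrite /w ler_wpDl // sqr_ge0.
have ellp : is_ellipse_param ea eb ec.
  split; first by rewrite /ea divr_gt0 //; lra.
  rewrite -subr_gt0.
  have -> : ea * ec - eb ^+ 2 = den^-1.
    rewrite /ea /eb /ec /den /w; field.
    by rewrite -/w; apply/andP; split; rewrite gt_eqF // subr_gt0.
  by rewrite invr_gt0.
have LS : L = (circle r `&` ellipse_region ea eb ec) `|` (ellipse ea eb ec `&` disk r).
  apply/seteqP; split; move=> [x y] /=.
  1-2: set u := x ^+ 2 + y ^+ 2; set dd := (x * b4 - y * b3) ^+ 2.
  1-2: have hu : 0 <= u by rewrite /u addr_ge0 // sqr_ge0.
  1-2: have hdd : 0 <= dd by rewrite /dd sqr_ge0.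
  1-2: have huw : dd <= u * w by
         rewrite -subr_ge0 (_ : u * w - dd = (x * b3 + y * b4) ^+ 2) ?sqr_ge0 //;
         rewrite /u /w /dd; ring.
  1-2: have cp : char_poly ((Tmat b0 x y b3 b4)^T *m Tmat b0 x y b3 b4) =
         ('X - c0%:P) * ('X^2 - (u + w)%:P * 'X + dd%:P) by
         rewrite charT /u /w /dd !addrA.
  1-2: have eR : (ea * x ^+ 2 + 2 * eb * x * y + ec * y ^+ 2 <= 1) <->
                 (K * (u + w) - dd <= K ^+ 2) by
         rewrite qf ler_pdivrMr // mul1r /den;
         (have e : K * (u + w) - dd - K ^+ 2 = (K * u - dd) - K * (K - w) by ring);
         split => h; rewrite -subr_le0 ?e subr_le0 // -subr_le0 -e subr_le0.
  1-2: have eE : (ea * x ^+ 2 + 2 * eb * x * y + ec * y ^+ 2 = 1) <->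
                 (K * (u + w) - dd = K ^+ 2) by
         rewrite qf;
         (have e : K * (u + w) - dd - K ^+ 2 = (K * u - dd) - den by rewrite /den; ring);
         split => h;
         [ (have h' : K * u - dd = den by rewrite -[RHS]mul1r -h mulfVK);
           by apply/eqP; rewrite -subr_eq0 e h' subrr
         | (have h' : K * u - dd = den by apply/eqP; rewrite -subr_eq0 -e h subrr);
           by rewrite h' divff ].
  1-2: rewrite /circle /disk /ellipse /ellipse_region /= -/u r2.
  - rewrite /L /horodeckiM /= => -[l1 [l2 [l3 [h32 [h21 [E hk]]]]]].
    rewrite cp in E.
    have := @abs_dir1 R c0 u w dd k hc0 Hnondeg l1 l2 l3 h32 h21 E hk.
    rewrite -/w -/K.
    case=> [[h1 h2]|[h1 h2]]; [left|right]; split.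
    + lra.
    + by apply/eR.
    + by apply/eE.
    + lra.
  - move=> hS.
    have : (u = k - w /\ (k - c0) * (u + w) - dd <= (k - c0) ^+ 2) \/
           ((k - c0) * (u + w) - dd = (k - c0) ^+ 2 /\ u + w <= k).
      case: hS => [[h1 h2]|[h1 h2]]; [left|right]; split.
      + lra.
      + by apply/eR.
      + by apply/eE.
      + lra.
    move/(@abs_dir2 R c0 u w dd k hc0 hdd hu hw huw Hnondeg) => [l1 [l2 [l3 [h1 [h2 [h3 h4]]]]]].
    rewrite /L /horodeckiM /=; exists l1, l2, l3; split => //; split => //.
    by rewrite cp; split.
exists r, ea, eb, ec; split => //; split => //; split; last first.
  by split => //; rewrite LS; exact: conn_S.
by rewrite LS => p [[hc _]|[he _]]; [left|right].
Qed.
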